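(* Let $G=K\rtimes H$ be a Frobenius group with kernel $K$ and complement $H$, acting on $K$ by $\circ$, and suppose $|H|\neq|K|-1$. Then for any two distinct elements $u,v\in K$, $$|\{z\in K:\ z \text{ separates } u \text{ and } v\}|>|K|/2.$$
   Context: A Frobenius group is a finite group $G$ acting transitively on a finite set such that only the identity has more than one fixed point and some nontrivial element fixes a point; its kernel $K$ (identity plus fixed-point-free elements) is normal and a complement $H$ (a point stabilizer) satisfies $K\cap H=\{1\}$, $G=KH$. The action $\circ$ of $G$ on $K$: for $g=yh$ with $y\in K,h\in H$, $g\circ x=yhxh^{-1}$. For $u\neq v$ in $K$, $z\in K$ separates $u$ and $v$ if $v\circ z\notin H\circ(u\circ z)$, where $H\circ w=\{h\circ w:h\in H\}$. *)

(* Defs.v *)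
From mathcomp Require Import all_boot all_fingroup all_solvable.
Set Implicit Arguments. Unset Strict Implicit. Unset Printing Implicit Defensive.
Local Open Scope group_scope.

(* The action "o" of G = K H on K: for g = y h with y in K, h in H,
   g o x = y h x h^-1.  remgr K H g is the H-component h of g and
   divgr K H g = g h^-1 is the K-component y. *)
Definition frob_act (gT : finGroupType) (K H : {set gT}) (g x : gT) : gT :=
  divgr K H g * (remgr K H g * x * (remgr K H g)^-1).

Definition separates (gT : finGroupType) (K H : {set gT}) (u v z : gT) : bool :=
  frob_act K H v z \notin [set frob_act K H h (frob_act K H u z) | h in H].

(* Main.v *)
Require Import Defs.
From mathcomp Require Import all_boot all_fingroup all_solvable.
From mathcomp Require Import zify.
Local Open Scope group_scope.

Lemma comm_aux (gT : finGroupType) (a h w1 w2 : gT) :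
  a * w1 = h * w1 * h^-1 -> a * w2 = h * w2 * h^-1 ->
  commute (w2^-1 * w1) h.
Proof.
move=> E1 E2.
have: h * w1 * h^-1 * w1^-1 = h * w2 * h^-1 * w2^-1 by rewrite -E1 -E2 !mulgK.
rewrite -!mulgA => /mulgI.
move/(congr1 (fun t => w2^-1 * t * w1)).
rewrite !mulgA mulVg mul1g -!mulgA mulVg mulg1 => E.
rewrite -[h]invgK; apply: commuteV; rewrite /commute.
by rewrite mulgA in E.
Qed.

Lemma arith (a b c d : nat) :
  (d + c = a -> c <= b - 1 -> 1 < a -> 0 < b -> 2 * b <= a.-1 -> a < 2 * d)%N.
Proof. lia. Qed.

Theorem lemma3 (gT : finGroupType) (G K H : {group gT}) :
  [Frobenius G = K ><| H] ->
  #|H| != (#|K| - 1)%N ->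
  forall u v : gT, u \in K -> v \in K -> u != v ->
  (#|K| < 2 * #|[set z in K | separates K H u v z]|)%N.
Proof.
move=> frobG neH u v Ku Kv neuv.
have [defG ntK ntH _ _] := Frobenius_context frobG.
have [_ _ _ tiKH] := sdprodP defG.
have regH := Frobenius_reg_ker frobG.
have actK x z : x \in K -> frob_act K H x z = x * z.
  by move=> Kx; rewrite /frob_act remgr1 // divgr_id // invg1 mulg1 mul1g.
have actH h w : h \in H -> frob_act K H h w = h * w * h^-1.
  by move=> Hh; rewrite /frob_act /divgr remgr_id // mulgV mul1g.
set N := [set z in K | ~~ separates K H u v z].
have Nchar z : z \in N -> z \in K /\ exists2 h, h \in H & v * z = h * (u * z) * h^-1.
  rewrite !inE /separates negbK => /andP[Kz /imsetP[h Hh]].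
  rewrite (actK v) // (actK u) // => E; split=> //; exists h => //; by rewrite E actH.
pose f := fun y => odflt 1 [pick h in H | v * y == h * (u * y) * h^-1].
have fP z : z \in N -> f z \in H^# /\ v * z = f z * (u * z) * (f z)^-1.
  move=> /Nchar[Kz [h0 Hh0 E0]]; rewrite /f.
  case: pickP => [h /andP[Hh /eqP E]|/(_ h0)]; last by rewrite Hh0 E0 eqxx.
  rewrite /=; split=> //; rewrite !inE Hh andbT; apply: contraNneq neuv => h1.
  by move: E; rewrite h1 invg1 mul1g mulg1 => /mulIg ->.
have injf : {in N &, injective f}.
  move=> z1 z2 N1 N2 ef.
  have [K1 _] := Nchar _ N1; have [K2 _] := Nchar _ N2.
  have [H1 E1] := fP _ N1; have [_ E2] := fP _ N2; rewrite -ef in E2.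
  have E1' : (v * u^-1) * (u * z1) = f z1 * (u * z1) * (f z1)^-1.
    by rewrite mulgA mulgKV.
  have E2' : (v * u^-1) * (u * z2) = f z1 * (u * z2) * (f z1)^-1.
    by rewrite mulgA mulgKV.
  have C := @comm_aux _ _ _ _ _ E1' E2'.
  have : (u * z2)^-1 * (u * z1) \in 'C_K[f z1].
    rewrite in_setI; apply/andP; split; first by rewrite groupMr ?groupV ?groupM.
    by apply/cent1P.
  rewrite (regH _ H1) inE => /eqP.
  by move/(canRL (mulKVg _)); rewrite mulg1 => /mulgI.
have cardN : (#|N| <= #|H| - 1)%N.
  rewrite -(card_in_imset injf) (cardsD1 1 H) group1 /= add1n subSS subn0.
  by apply: subset_leq_card; apply/subsetP=> _ /imsetP[z Nz ->]; case: (fP z Nz).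
have split : (#|[set z in K | separates K H u v z]| + #|N|)%N = #|K|.
  rewrite -(cardsID [set z | separates K H u v z] K); congr (_ + _).
    by apply: eq_card => z; rewrite !inE.
  by apply: eq_card => z; rewrite !inE andbC.
have dv := Frobenius_dvd_ker1 frobG.
have K1 : (1 < #|K|)%N by rewrite cardG_gt1.
have H1 : (0 < #|H|)%N by rewrite cardG_gt0.
case/dvdnP: dv => k Ek.
have k2 : (2 <= k)%N.
  case: k Ek => [|[|k]] Ek //.
    by move: K1 Ek; rewrite mul0n; case: #|K| => [|[|n]].
  by move: neH; rewrite subn1 Ek mul1n eqxx.
have : (2 * #|H| <= #|K|.-1)%N by rewrite Ek leq_mul2r k2 orbT.
move: split cardN K1 H1.
move: #|K| #|H| #|N| #|[set z in K | separates K H u v z]| => a b c d.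
exact: arith.
Qed.
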